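(* Let $m,n\in\mathbb{Z}_{>0}$ with $m<n$ and $m,n$ of the same parity, and let $\psi:\mathcal{G}^{(m,n)}\to\mathbb{C}$ be a Whittaker function with $\psi(I_{m+n-1})\psi(J_{m+n-1})\ne0$. Then $W'=\mathrm{Ind}_{\mathcal{G}^{(m,n)}}^{\mathcal{G}^{(m,0)}}\mathbb{C}w_\psi$ is an irreducible $\mathcal{G}^{(m,0)}$-module, and for all $w\in W'$ and $i\in\mathbb{Z}_{\ge0}$: $L_{m+n+i}w=\psi(L_{m+n+i})w$, $H_{m+n+i}w=\psi(H_{m+n+i})w$, $I_{n+i}w=\psi(I_{n+i})w$, $J_{n+i}w=\psi(J_{n+i})w$.
   Context: $\mathcal{G}$ is the complex Lie algebra with basis $\{L_n,H_n,I_n,J_n,\mathbf{c}_1,\mathbf{c}_2,\mathbf{c}_3: n\in\mathbb{Z}\}$ whose brackets of basis elements are $[L_m,L_n]=(n-m)L_{m+n}+\frac{m^3-m}{12}\delta_{m+n,0}\mathbf{c}_1$, $[L_m,H_n]=nH_{m+n}+m^2\delta_{m+n,0}\mathbf{c}_2$, $[H_m,H_n]=m\delta_{m+n,0}\mathbf{c}_3$, $[L_m,I_n]=(n-m)I_{m+n}$, $[L_m,J_n]=(n-m)J_{m+n}$, $[H_m,I_n]=I_{m+n}$, $[H_m,J_n]=-J_{m+n}$ (and antisymmetric counterparts), all other brackets of basis elements zero. For $m,n\ge0$, $\mathcal{G}^{(m,n)}=\sum_{i\ge0}(\mathbb{C}L_{m+i}+\mathbb{C}H_{m+i}+\mathbb{C}I_{n+i}+\mathbb{C}J_{n+i})+\sum_{k=1}^3\mathbb{C}\mathbf{c}_k$.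 A Whittaker function is a Lie algebra homomorphism $\psi:\mathcal{G}^{(m,n)}\to\mathbb{C}$; $\mathbb{C}w_\psi$ is the one-dimensional $\mathcal{G}^{(m,n)}$-module with $xw_\psi=\psi(x)w_\psi$, and $\mathrm{Ind}$ denotes the induced module $\mathcal{U}(\mathcal{G}^{(m,0)})\otimes_{\mathcal{U}(\mathcal{G}^{(m,n)})}\mathbb{C}w_\psi$. *)

(* Defs.v *)
(* The field C of complex numbers is rendered as
   [complex R] (= R[i]) for an arbitrary [R : realType]. *)
From HB Require Import structures.
From mathcomp Require Import all_boot all_order all_algebra.
From mathcomp Require Import reals.
From mathcomp.real_closed Require Import complex.
Set Implicit Arguments. Unset Strict Implicit. Unset Printing Implicit Defensive.
Import Order.TTheory GRing.Theory Num.Theory.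
Local Open Scope ring_scope.

Inductive Gbasis : Type :=
  | BL of int | BH of int | BI of int | BJ of int | Bc1 | Bc2 | Bc3.

Section Bracket.
Variable C : fieldType.

Definition dlt (a b : int) : C := if a + b == 0 then 1 else 0.

(* [b1, b2] as a formal linear combination (list of (coefficient, basis)). *)
Definition brk (b1 b2 : Gbasis) : seq (C * Gbasis) :=
  match b1, b2 with
  | BL a, BL b => [:: ((b - a)%:~R, BL (a + b));
                      (((a ^+ 3 - a)%:~R / 12%:R) * dlt a b, Bc1)]
  | BL a, BH b => [:: (b%:~R, BH (a + b)); ((a ^+ 2)%:~R * dlt a b, Bc2)]
  | BH a, BL b => [:: (- a%:~R, BH (a + b)); (- (b ^+ 2)%:~R * dlt a b, Bc2)]
  | BH a, BH b => [:: (a%:~R * dlt a b, Bc3)]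
  | BL a, BI b => [:: ((b - a)%:~R, BI (a + b))]
  | BI a, BL b => [:: ((b - a)%:~R, BI (a + b))]
  | BL a, BJ b => [:: ((b - a)%:~R, BJ (a + b))]
  | BJ a, BL b => [:: ((b - a)%:~R, BJ (a + b))]
  | BH a, BI b => [:: (1, BI (a + b))]
  | BI a, BH b => [:: (-1, BI (a + b))]
  | BH a, BJ b => [:: (-1, BJ (a + b))]
  | BJ a, BH b => [:: (1, BJ (a + b))]
  | _, _ => [::]
  end.
End Bracket.

(* Basis elements of G^(m,n) = span{L_{m+i}, H_{m+i}, I_{n+i}, J_{n+i} : i>=0}
   + span{c1,c2,c3}. *)
Definition inSub (m n : nat) (b : Gbasis) : bool :=
  match b with
  | BL k | BH k => (m%:Z <= k)%R
  | BI k | BJ k => (n%:Z <= k)%R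
  | _ => true
  end.

(* A Whittaker function psi : G^(m,n) -> C, given by its values on the basis
   (extended linearly); being a Lie algebra homomorphism to the abelian C
   means it kills all brackets of basis elements of G^(m,n). *)
Definition whittaker_fun (C : fieldType) (m n : nat) (psi : Gbasis -> C) :=
  forall b1 b2, inSub m n b1 -> inSub m n b2 ->
    \sum_(p <- brk C b1 b2) p.1 * psi p.2 = 0.

(* A G^(m,n)-module structure on V, given by the action of the basis
   elements (extended linearly): rho [x,y] = rho x rho y - rho y rho x. *)
Definition is_Gmod (C : fieldType) (m n : nat) (V : lmodType C)
    (rho : Gbasis -> {linear V -> V}) :=
  forall b1 b2, inSub m n b1 -> inSub m n b2 -> forall v : V,
    rho b1 (rho b2 v) - rho b2 (rho b1 v) = \sum_(p <- brk C b1 b2) p.1 *: rho p.2 v.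

Definition is_Gmod_hom (C : fieldType) (m n : nat) (V V' : lmodType C)
    (rho : Gbasis -> {linear V -> V}) (rho' : Gbasis -> {linear V' -> V'})
    (f : {linear V -> V'}) :=
  forall b, inSub m n b -> forall v, f (rho b v) = rho' b (f v).

Definition whittaker_vec (C : fieldType) (m' n' : nat) (V : lmodType C)
    (rho : Gbasis -> {linear V -> V}) (psi : Gbasis -> C) (w : V) :=
  forall b, inSub m' n' b -> rho b w = psi b *: w.

(* (V, rho, w) is the induced module Ind_{G^(m,n)}^{G^(m,0)} C w_psi
   = U(G^(m,0)) (x)_{U(G^(m,n))} C w_psi, characterized by its universal
   property: a G^(m,0)-module with w = 1 (x) w_psi satisfying x w = psi(x) w
   for x in G^(m,n), such that for every G^(m,0)-module V' and vector w'
   with the same property there is a unique module map V -> V' with w |-> w'. *)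
Definition is_induced (C : fieldType) (m n : nat) (psi : Gbasis -> C)
    (V : lmodType C) (rho : Gbasis -> {linear V -> V}) (w : V) : Prop :=
  [/\ is_Gmod m 0 rho, whittaker_vec m n rho psi w &
    forall (V' : lmodType C) (rho' : Gbasis -> {linear V' -> V'}) (w' : V'),
      is_Gmod m 0 rho' -> whittaker_vec m n rho' psi w' ->
      exists f : {linear V -> V'},
        [/\ is_Gmod_hom m 0 rho rho' f, f w = w' &
          forall g : {linear V -> V'}, is_Gmod_hom m 0 rho rho' g -> g w = w' ->
            forall v, g v = f v]].

Definition is_submodule (C : fieldType) (m n : nat) (V : lmodType C)
    (rho : Gbasis -> {linear V -> V}) (S : V -> Prop) :=
  [/\ S 0, (forall u v, S u -> S v -> S (u + v)),
      (forall (a : C) v, S v -> S (a *: v)) &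
      (forall b, inSub m n b -> forall v, S v -> S (rho b v))].

Definition irreducible_Gmod (C : fieldType) (m n : nat) (V : lmodType C)
    (rho : Gbasis -> {linear V -> V}) :=
  (exists v : V, v != 0) /\
  forall S, is_submodule m n rho S ->
    (forall v, S v -> v = 0) \/ (forall v, S v).

(* Main.v *)
Require Import Defs.
From HB Require Import structures.
From mathcomp Require Import all_boot all_order all_algebra.
From mathcomp Require Import reals.
From mathcomp.real_closed Require Import complex.
From mathcomp Require Import zify ring lra.
From mathcomp.multinomials Require Import mpoly.
From mathcomp.multinomials Require ssrcomplements.
Import Order.TTheory GRing.Theory Num.Theory.
Local Open Scope ring_scope.
Set Implicit Arguments. Unset Strict Implicit. Unset Printing Implicit Defensive.
Section DerSec.
Variable (F : fieldType) (N : nat).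
Local Notation M := {mpoly F[N]}.

Definition Der (d : 'I_N -> M) (p : M) : M := \sum_(i < N) p^`M(i) * d i.

Lemma Der_is_linear d : linear (Der d).
Proof.
move=> c p q; rewrite /Der scaler_sumr -big_split /=; apply: eq_bigr => i _.
by rewrite mderivD mderivZ mulrDl scalerAl.
Qed.
HB.instance Definition _ d := GRing.isLinear.Build F M M _ (Der d) (Der_is_linear d).

Lemma Der0 d : Der d 0 = 0. Proof. exact: linear0. Qed.
Lemma DerD d p q : Der d (p + q) = Der d p + Der d q. Proof. exact: linearD. Qed.
Lemma DerB d p q : Der d (p - q) = Der d p - Der d q. Proof. exact: linearB. Qed.
Lemma DerN d p : Der d (- p) = - Der d p. Proof. exact: linearN. Qed.
Lemma DerZ d c p : Der d (c *: p) = c *: Der d p. Proof. exact: linearZ. Qed.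
Lemma DerC d c : Der d c%:MP = 0.
Proof. by rewrite /Der big1 // => i _; rewrite mderivC mul0r. Qed.

Lemma DerM d p q : Der d (p * q) = Der d p * q + p * Der d q.
Proof.
rewrite /Der mulr_suml mulr_sumr -big_split /=; apply: eq_bigr => i _.
by rewrite mderivM mulrDl; ring.
Qed.

Lemma DerX d (i : 'I_N) : Der d 'X_i = d i.
Proof.
rewrite /Der (bigD1 i) //= big1 ?addr0.
  rewrite mderivX mnm1E eqxx.
  have -> : (U_(i) - U_(i))%MM = 0%MM by apply/mnmP => j; rewrite mnmBE subnn mnm0E.
  by rewrite mpolyX0 scale1r mul1r.
by move=> j /negPf ji; rewrite mderivX mnm1E eq_sym ji scale0r mul0r.
Qed.

Lemma Der_d0 p : Der (fun _ => 0) p = 0.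
Proof. by rewrite /Der big1 // => i _; rewrite mulr0. Qed.

Lemma Der_ext d e p : (forall i, d i = e i) -> Der d p = Der e p.
Proof. by move=> H; rewrite /Der; apply: eq_bigr => i _; rewrite H. Qed.

Lemma Der_dD d e p : Der (fun i => d i + e i) p = Der d p + Der e p.
Proof. by rewrite /Der -big_split; apply: eq_bigr => i _; rewrite mulrDr. Qed.

Lemma Der_dZ c d p : Der (fun i => c *: d i) p = c *: Der d p.
Proof. by rewrite /Der scaler_sumr; apply: eq_bigr => i _; rewrite scalerAr. Qed.

Lemma Der_dsum (T : Type) (l : seq T) (c : T -> F) (D : T -> 'I_N -> M) p :
  Der (fun i => \sum_(t <- l) c t *: D t i) p = \sum_(t <- l) c t *: Der (D t) p.
Proof.
elim: l => [|t l IH]; first by rewrite big_nil (Der_ext _ (e := fun _ => 0)) ?Der_d0 // => i; rewrite big_nil.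
rewrite big_cons -IH -Der_dZ -Der_dD; apply: Der_ext => i; by rewrite big_cons.
Qed.

Lemma Der_comm d e p :
  Der d (Der e p) - Der e (Der d p) = Der (fun i => Der d (e i) - Der e (d i)) p.
Proof.
have H : forall d e : 'I_N -> M, Der d (Der e p) =
   \sum_(i < N) \sum_(j < N) (p^`M(i))^`M(j) * d j * e i + \sum_(i < N) p^`M(i) * Der d (e i).
  move=> d1 e1; rewrite [Der e1 p]/Der raddf_sum -big_split /=; apply: eq_bigr => i _.
  rewrite DerM /Der mulr_suml; congr (_ + _); apply: eq_bigr => j _; ring.
rewrite !H.
rewrite [X in X + _ - _]exchange_big /=.
have -> : \sum_(j < N) \sum_(i < N) (p^`M(j))^`M(i) * e i * d j =
          \sum_(j < N) \sum_(i < N) (p^`M(i))^`M(j) * d j * e i.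
  apply: eq_bigr => j _; apply: eq_bigr => i _; rewrite mderiv_comm; ring.
set A := \sum_(j < N) _.
set B1 := \sum_(i < N) _.
set B2 := \sum_(i < N) _.
have -> : A + B1 - (A + B2) = B1 - B2 by ring.
rewrite /B1 /B2 -sumrB /Der; apply: eq_bigr => i _; by rewrite mulrBr.
Qed.
End DerSec.
Section Model.
Variable (R : realType) (m n : nat) (psi : Gbasis -> R[i]).
Hypothesis (Hm : (0 < m)%N) (Hmn : (m < n)%N) (Hpsi : whittaker_fun m n psi).
Local Notation C := R[i].
Local Notation M := {mpoly C[n + n]}.

Lemma psiI0 (j : int) : (m + n)%:Z <= j -> psi (BI j) = 0.
Proof.
move=> Hj; have := Hpsi (b1 := BH m%:Z) (b2 := BI (j - m%:Z)) _ _.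
rewrite /= big_cons big_nil addr0 mul1r (_ : m%:Z + (j - m%:Z) = j); last by lia.
apply => //; lia.
Qed.

Lemma psiJ0 (j : int) : (m + n)%:Z <= j -> psi (BJ j) = 0.
Proof.
move=> Hj; have := Hpsi (b1 := BH m%:Z) (b2 := BJ (j - m%:Z)) _ _.
rewrite /= big_cons big_nil addr0 mulN1r (_ : m%:Z + (j - m%:Z) = j); last by lia.
by move=> H; apply/eqP; rewrite -oppr_eq0 H //; lia.
Qed.

Lemma psiL0 (j : int) : (m + m + 1)%:Z <= j -> psi (BL j) = 0.
Proof.
move=> Hj.
have h1 : inSub m n (BL m%:Z) by rewrite /= lexx.
have h2 : inSub m n (BL (j - m%:Z)) by rewrite /=; lia.
have := Hpsi h1 h2.
rewrite /= !big_cons big_nil addr0 (_ : m%:Z + (j - m%:Z) = j); last by lia.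
rewrite /dlt (_ : (m%:Z + (j - m%:Z) == 0) = false); last by apply/eqP; lia.
rewrite mulr0 ?mul0r ?mulr0 addr0.
move/eqP; rewrite mulf_eq0 => /orP [|/eqP //].
rewrite intr_eq0 => /eqP; lia.
Qed.

Lemma psiH0 (j : int) : (m + m)%:Z <= j -> psi (BH j) = 0.
Proof.
move=> Hj.
have h1 : inSub m n (BL m%:Z) by rewrite /= lexx.
have h2 : inSub m n (BH (j - m%:Z)) by rewrite /=; lia.
have := Hpsi h1 h2.
rewrite /= !big_cons big_nil addr0 (_ : m%:Z + (j - m%:Z) = j); last by lia.
rewrite /dlt (_ : (m%:Z + (j - m%:Z) == 0) = false); last by apply/eqP; lia.
rewrite mulr0 ?mul0r ?mulr0 addr0.
move/eqP; rewrite mulf_eq0 => /orP [|/eqP //].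
rewrite intr_eq0 => /eqP; lia.
Qed.

Definition xo (j : int) : option 'I_n := if j is Posz k then insub k else None.
Definition Xv (j : int) : M := if xo j is Some i then 'X_(lshift n i) else (psi (BI j))%:MP.
Definition Yv (j : int) : M := if xo j is Some i then 'X_(rshift n i) else (psi (BJ j))%:MP.

Lemma xo_lt (j : int) : 0 <= j -> j < n -> exists i : 'I_n, xo j = Some i /\ (i : int) = j.
Proof.
case: j => // k _ Hk; have Hk' : (k < n)%N by lia.
by exists (Ordinal Hk'); rewrite /xo insubT.
Qed.

Lemma xo_ge (j : int) : n%:Z <= j -> xo j = None.
Proof. by case: j => // k Hk; rewrite /xo insubN //; apply/negP; lia. Qed.

Lemma XvZ j : (m + n)%:Z <= j -> Xv j = 0.
Proof. by move=> Hj; rewrite /Xv xo_ge ?psiI0 //; lia. Qed.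
Lemma YvZ j : (m + n)%:Z <= j -> Yv j = 0.
Proof. by move=> Hj; rewrite /Yv xo_ge ?psiJ0 //; lia. Qed.

Definition dS (a : int) (fx fy : int -> C) (i : 'I_(n + n)) : M :=
  match split i with inl k => fx k *: Xv (k%:Z + a) | inr k => fy k *: Yv (k%:Z + a) end.

Lemma dS_l a fx fy (k : 'I_n) : dS a fx fy (lshift n k) = fx k *: Xv (k%:Z + a).
Proof. by rewrite /dS (unsplitK (inl k)). Qed.
Lemma dS_r a fx fy (k : 'I_n) : dS a fx fy (rshift n k) = fy k *: Yv (k%:Z + a).
Proof. by rewrite /dS (unsplitK (inr k)). Qed.

Lemma DSX a fx fy j : m%:Z <= a -> 0 <= j -> Der (dS a fx fy) (Xv j) = fx j *: Xv (j + a).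
Proof.
move=> Ha Hj; case: (ltrP j n) => Hjn.
  have [i [Ei Eij]] := xo_lt Hj Hjn; by rewrite /Xv Ei DerX dS_l Eij.
by rewrite /Xv xo_ge // DerC -/(Xv _) XvZ ?scaler0 //; lia.
Qed.

Lemma DSY a fx fy j : m%:Z <= a -> 0 <= j -> Der (dS a fx fy) (Yv j) = fy j *: Yv (j + a).
Proof.
move=> Ha Hj; case: (ltrP j n) => Hjn.
  have [i [Ei Eij]] := xo_lt Hj Hjn; by rewrite /Yv Ei DerX dS_r Eij.
by rewrite /Yv xo_ge // DerC -/(Yv _) YvZ ?scaler0 //; lia.
Qed.

Definition fL (a : int) (k : int) : C := (k - a)%:~R.
Definition dB (b : Gbasis) : 'I_(n + n) -> M :=
  match b with
  | BL a => dS a (fL a) (fL a)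
  | BH a => dS a (fun _ => 1) (fun _ => -1)
  | _ => fun _ => 0
  end.
Definition sB (b : Gbasis) : C :=
  match b with BI _ | BJ _ => 0 | _ => psi b end.
Definition qB (b : Gbasis) : M :=
  match b with BI j => Xv j | BJ j => Yv j | _ => 0 end.

Definition rhoMf (b : Gbasis) (p : M) : M := sB b *: p + Der (dB b) p + qB b * p.

Lemma lin_alg (s c : C) (p q Dp Dq Q : M) :
  s *: (c *: p + q) + (c *: Dp + Dq) + Q * (c *: p + q) =
  c *: (s *: p + Dp + Q * p) + (s *: q + Dq + Q * q).
Proof. rewrite -!mul_mpolyC; move: (s%:MP) (c%:MP) => S1 S2; ring. Qed.

Lemma rhoMf_is_linear b : linear (rhoMf b).
Proof. move=> c p q; rewrite /rhoMf DerD DerZ; exact: lin_alg. Qed.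
HB.instance Definition _ b := GRing.isLinear.Build C M M _ (rhoMf b) (rhoMf_is_linear b).

Lemma ocomm_alg (s1 s2 : C) (p A1 A2 B12 B21 C12 C21 q1 q2 : M) :
 s1 *: (s2 *: p + A2 + q2 * p) + (s2 *: A1 + B12 + (C12 * p + q2 * A1)) + q1 * (s2 *: p + A2 + q2 * p)
 - (s2 *: (s1 *: p + A1 + q1 * p) + (s1 *: A2 + B21 + (C21 * p + q1 * A2)) + q2 * (s1 *: p + A1 + q1 * p))
 = B12 - B21 + (C12 - C21) * p.
Proof. rewrite -!mul_mpolyC; move: (s1%:MP) (s2%:MP) => S1 S2; ring. Qed.

Lemma Ocomm b1 b2 p : rhoMf b1 (rhoMf b2 p) - rhoMf b2 (rhoMf b1 p) =
  Der (fun i => Der (dB b1) (dB b2 i) - Der (dB b2) (dB b1 i)) p +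
  (Der (dB b1) (qB b2) - Der (dB b2) (qB b1)) * p.
Proof.
rewrite -Der_comm /rhoMf !(DerD, DerZ, DerM); exact: ocomm_alg.
Qed.

Definition rhoM (b : Gbasis) : {linear M -> M} := rhoMf b.

Lemma osum_alg (c s S : C) (p D D' q Q : M) :
  c *: (s *: p + D + q * p) + (S *: p + D' + Q * p) =
  (c * s + S) *: p + (c *: D + D') + (c *: q + Q) * p.
Proof. rewrite -!mul_mpolyC rmorphD rmorphM /=; move: (s%:MP) (c%:MP) (S%:MP) => S1 S2 S3; ring. Qed.

Lemma Osum (l : seq (C * Gbasis)) p :
  \sum_(pr <- l) pr.1 *: rhoMf pr.2 p =
  (\sum_(pr <- l) pr.1 * sB pr.2) *: p + Der (fun i => \sum_(pr <- l) pr.1 *: dB pr.2 i) p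
  + (\sum_(pr <- l) pr.1 *: qB pr.2) * p.
Proof.
rewrite Der_dsum; elim: l => [|pr l IH]; first by rewrite !big_nil scale0r mul0r !addr0.
rewrite !big_cons IH /rhoMf; exact: osum_alg.
Qed.

Lemma Gmod_crit b1 b2 :
  \sum_(pr <- brk C b1 b2) pr.1 * sB pr.2 = 0 ->
  (forall i, Der (dB b1) (dB b2 i) - Der (dB b2) (dB b1 i) = \sum_(pr <- brk C b1 b2) pr.1 *: dB pr.2 i) ->
  Der (dB b1) (qB b2) - Der (dB b2) (qB b1) = \sum_(pr <- brk C b1 b2) pr.1 *: qB pr.2 ->
  forall p, rhoM b1 (rhoM b2 p) - rhoM b2 (rhoM b1 p) = \sum_(pr <- brk C b1 b2) pr.1 *: rhoM pr.2 p.
Proof.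
move=> h1 h2 h3 p; rewrite Ocomm Osum h1 scale0r add0r h3; congr (_ + _).
exact: Der_ext.
Qed.

Lemma crit_s b1 b2 : inSub m 0 b1 -> inSub m 0 b2 ->
  \sum_(pr <- brk C b1 b2) pr.1 * sB pr.2 = 0.
Proof.
move=> H1 H2; have := Hpsi (b1 := b1) (b2 := b2).
case: b1 H1 => [a|a|a|a|||]; case: b2 H2 => [b|b|b|b|||] //= H2 H1 Hp;
  rewrite ?big_cons ?big_nil /= ?mulr0 ?addr0 //; move: (Hp H1 H2);
  rewrite ?big_cons ?big_nil //.
all: by rewrite /= ?addr0; exact: id.
Qed.

Lemma commS a b fx fy gx gy i : m%:Z <= a -> m%:Z <= b ->
  Der (dS a fx fy) (dS b gx gy i) - Der (dS b gx gy) (dS a fx fy i) =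
  match split i with
  | inl k => (gx k * fx (k%:Z + b) - fx k * gx (k%:Z + a)) *: Xv (k%:Z + (a + b))
  | inr k => (gy k * fy (k%:Z + b) - fy k * gy (k%:Z + a)) *: Yv (k%:Z + (a + b))
  end.
Proof.
move=> Ha Hb; rewrite [dS b gx gy i]/dS [dS a fx fy i]/dS.
case: (split i) => k; rewrite !DerZ ?DSX ?DSY //; try lia;
  by rewrite !scalerA scalerBl -!addrA [b + a]addrC.
Qed.

Lemma crit_d b1 b2 : inSub m 0 b1 -> inSub m 0 b2 -> forall i,
  Der (dB b1) (dB b2 i) - Der (dB b2) (dB b1 i) = \sum_(pr <- brk C b1 b2) pr.1 *: dB pr.2 i.
Proof.
move=> H1 H2 i.
case: b1 H1 => [a|a|a|a|||]; case: b2 H2 => [b|b|b|b|||] //= H2 H1;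
  rewrite ?big_cons ?big_nil /= ?Der_d0 ?Der0 ?scaler0 ?addr0 ?subr0 //.
all: rewrite commS // /dS; case: (split i) => k.
all: first [by rewrite subrr scale0r | rewrite scalerA; congr (_ *: _);
  rewrite /fL ?intrD ?intrB; ring].
Qed.

Lemma crit_q b1 b2 : inSub m 0 b1 -> inSub m 0 b2 ->
  Der (dB b1) (qB b2) - Der (dB b2) (qB b1) = \sum_(pr <- brk C b1 b2) pr.1 *: qB pr.2.
Proof.
case: b1 => [a|a|a|a|||]; case: b2 => [b|b|b|b|||] //= H1 H2;
  rewrite ?big_cons ?big_nil /= ?Der_d0 ?Der0 ?scaler0 ?addr0 ?subr0 ?sub0r ?DSX ?DSY //.
all: by rewrite ?[b + a]addrC /fL -?scaleNr ?opprK // -intrN opprB.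
Qed.

Lemma rhoM_Gmod : is_Gmod m 0 rhoM.
Proof.
move=> b1 b2 H1 H2 p; apply: Gmod_crit.
- exact: crit_s.
- exact: crit_d.
- exact: crit_q.
Qed.

Lemma rhoM_wh : whittaker_vec m n rhoM psi 1.
Proof.
move=> b Hb; rewrite /= /rhoMf DerC mulr1.
case: b Hb => [a|a|a|a|||] //= Hb; rewrite ?mulr0 ?addr0 ?scale0r ?add0r //.
- rewrite /Xv xo_ge ?alg_mpolyC //; lia.
- rewrite /Yv xo_ge ?alg_mpolyC //; lia.
Qed.

Variable (V : lmodType C) (rho : Gbasis -> {linear V -> V}) (w0 : V).
Hypothesis (HG : is_Gmod m 0 rho) (Hw : whittaker_vec m n rho psi w0).

Definition E (i : 'I_(n + n)) : V -> V :=
  match split i with inl k => rho (BI k) | inr k => rho (BJ k) end.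

Definition Fm (a : 'X_{1..n + n}) (s : seq 'I_(n + n)) (u : V) : V :=
  foldr (fun i u => iter (a i) (E i) u) u s.

Definition mono a := Fm a (enum 'I_(n + n)) w0.

Lemma comm0 b1 b2 u : inSub m 0 b1 -> inSub m 0 b2 -> brk C b1 b2 = [::] ->
  rho b1 (rho b2 u) = rho b2 (rho b1 u).
Proof. by move=> h1 h2 hb; apply/eqP; rewrite -subr_eq0 HG // hb big_nil. Qed.

Lemma E_lin i c u v : E i (c *: u + v) = c *: E i u + E i v.
Proof. by rewrite /E; case: (split i) => k; rewrite linearP. Qed.

Lemma E_comm i j u : E i (E j u) = E j (E i u).
Proof. by rewrite /E; case: (split i) => k; case: (split j) => l; apply: comm0. Qed.

Definition commE (T : V -> V) := forall i u, T (E i u) = E i (T u).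

Lemma Fm_commE T a s u : commE T -> T (Fm a s u) = Fm a s (T u).
Proof.
move=> HT; elim: s => //= j s IH; elim: (a j) => //= k IHk; by rewrite HT IHk.
Qed.

Lemma E_commE i : commE (E i).
Proof. by move=> j u; rewrite E_comm. Qed.

Lemma Fm_scale a s c u : Fm a s (c *: u) = c *: Fm a s u.
Proof.
elim: s => //= j s IH; rewrite IH; elim: (a j) => //= k ->.
by rewrite -[c *: _]addr0 E_lin /E; case: (split j) => l; rewrite linear0 addr0.
Qed.

Lemma Fm_ext (a b : 'X_{1..n + n}) (s : seq 'I_(n + n)) (u : V) : (forall j, j \in s -> a j = b j) -> Fm a s u = Fm b s u.
Proof.
elim: s => //= j s IH H; rewrite H ?mem_head // IH // => x xs; apply: H.
by rewrite in_cons xs orbT.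
Qed.

Lemma Fm_U a s u i : uniq s -> i \in s -> E i (Fm a s u) = Fm (a + U_(i))%MM s u.
Proof.
elim: s => //= j s IH /andP [js us]; rewrite in_cons => /orP [/eqP ij|iS].
  subst j; rewrite mnmDE mnm1E eqxx addn1 /= (@Fm_ext (a + U_(i))%MM a) //.
  move=> x xs; rewrite mnmDE mnm1E; case: eqP => [ix|]; last by rewrite addn0.
  by subst x; rewrite xs in js.
have ji : (i == j) = false by apply/eqP => ij; subst j; rewrite iS in js.
rewrite mnmDE mnm1E ji addn0 -IH //.
elim: (a j) => //= k <-; by rewrite E_comm.
Qed.

Lemma mono_U a i : E i (mono a) = mono (a + U_(i))%MM.
Proof. by rewrite /mono Fm_U ?enum_uniq ?mem_enum. Qed.

Lemma mono0 : mono 0%MM = w0.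
Proof. by rewrite /mono; elim: (enum _) => //= j s ->; rewrite mnm0E. Qed.

Definition g (p : M) : V := \sum_(a <- msupp p) p@_a *: mono a.

Lemma gwE k p : (msize p <= k)%N -> g p = \sum_(a : 'X_{1..(n + n) < k}) p@_a *: mono a.
Proof.
pose I : subFinType _ := 'X_{1..(n + n) < k}.
move=> le_pk; rewrite /g (ssrcomplements.big_mksub I) /=; first last.
  by move=> x /msize_mdeg_lt/leq_trans/(_ le_pk).
  by rewrite msupp_uniq.
rewrite big_rmcond //= => j /memN_msupp_eq0 ->.
by rewrite scale0r.
Qed.

Lemma g_is_linear : linear g.
Proof.
move=> c p q; set k := maxn (msize p) (msize q).
have hp : (msize p <= k)%N by rewrite leq_maxl.
have hq : (msize q <= k)%N by rewrite leq_maxr.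
have hpq : (msize (c *: p + q) <= k)%N.
  apply: leq_trans (msizeD_le _ _) _; rewrite geq_max hq andbT.
  exact: leq_trans (msizeZ_le _ _) hp.
rewrite !(gwE hp, gwE hq, gwE hpq) scaler_sumr -big_split /=; apply: eq_bigr => a _.
by rewrite mcoeffD mcoeffZ scalerDl scalerA.
Qed.
HB.instance Definition _ := GRing.isLinear.Build C M V _ g g_is_linear.

Lemma gX a : g 'X_[a] = mono a.
Proof. by rewrite /g msuppX big_seq1 mcoeffX eqxx scale1r. Qed.

Lemma g1 : g 1 = w0.
Proof. by rewrite -mpolyX0 gX mono0. Qed.

Lemma gE p : g p = \sum_(a <- msupp p) p@_a *: g 'X_[a].
Proof. by rewrite {1}/g; apply: eq_bigr => a _; rewrite gX. Qed.

Lemma g_mulX i p : g ('X_i * p) = E i (g p).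
Proof.
rewrite {1}[p]mpolyE mulr_sumr linear_sum [in RHS]gE.
elim: (msupp p) => [|a s IH]; first by rewrite !big_nil /E; case: (split i) => k; rewrite linear0.
rewrite !big_cons -scalerAr -mpolyXD linearZ /= IH !gX.
by rewrite E_lin addmC -mono_U.
Qed.


Lemma E_l (k : 'I_n) : E (lshift n k) = rho (BI k).
Proof. by rewrite /E (unsplitK (inl k)). Qed.
Lemma E_r (k : 'I_n) : E (rshift n k) = rho (BJ k).
Proof. by rewrite /E (unsplitK (inr k)). Qed.

Lemma commE_b b : inSub m 0 b -> (forall k : nat, brk C b (BI k) = [::] /\ brk C b (BJ k) = [::]) ->
  commE (rho b).
Proof.
move=> Hb Hk i u; rewrite /E; case: (split i) => k; apply: comm0 => //; by case: (Hk k).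
Qed.

Lemma scal_g b c : commE (rho b) -> rho b w0 = c *: w0 -> forall p, rho b (g p) = c *: g p.
Proof.
move=> Hc Hb p; rewrite /g linear_sum scaler_sumr; apply: eq_bigr => a _.
by rewrite linearZ /= /mono Fm_commE // Hb Fm_scale !scalerA mulrC.
Qed.

Lemma g_mulXv j p : 0 <= j -> g (Xv j * p) = rho (BI j) (g p).
Proof.
move=> Hj; case: (ltrP j n) => Hjn.
  have [i [Ei Eij]] := xo_lt Hj Hjn; by rewrite /Xv Ei g_mulX E_l Eij.
rewrite /Xv xo_ge // mul_mpolyC linearZ /=; symmetry; apply: scal_g.
  apply: commE_b => // k; by case: j Hj Hjn.
by rewrite Hw.
Qed.

Lemma g_mulYv j p : 0 <= j -> g (Yv j * p) = rho (BJ j) (g p).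
Proof.
move=> Hj; case: (ltrP j n) => Hjn.
  have [i [Ei Eij]] := xo_lt Hj Hjn; by rewrite /Yv Ei g_mulX E_r Eij.
rewrite /Yv xo_ge // mul_mpolyC linearZ /=; symmetry; apply: scal_g.
  apply: commE_b => // k; by case: j Hj Hjn.
by rewrite Hw.
Qed.

Lemma step b (a' : int) i q : (b = BL a' \/ b = BH a') -> m%:Z <= a' ->
  rho b (E i (g q)) = E i (rho b (g q)) + g (dB b i * q).
Proof.
move=> Hb Ha; have H0 : forall k : nat, 0 <= k%:Z + a' by move=> k; lia.
case: Hb => ->; rewrite /E /dB /dS; case: (split i) => k;
  rewrite -scalerAl linearZ /= ?g_mulXv ?g_mulYv //; apply/eqP; rewrite -subr_eq0 opprD addrA subr_eq0;
  rewrite HG //= ?big_cons ?big_nil ?addr0 ?[a' + k]addrC //.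
Qed.

Lemma rhoMf_X b (a' : int) i q : (b = BL a' \/ b = BH a') ->
  rhoMf b ('X_i * q) = 'X_i * rhoMf b q + dB b i * q.
Proof.
move=> Hb; have hq : qB b = 0 by case: Hb => ->.
by rewrite /rhoMf hq DerM DerX !mul0r !addr0 -!mul_mpolyC; ring.
Qed.

Lemma g_hom_LH b (a' : int) : (b = BL a' \/ b = BH a') -> m%:Z <= a' ->
  forall p, g (rhoMf b p) = rho b (g p).
Proof.
move=> Hb Ha.
have Hmono : forall d (a : 'X_{1..n + n}), mdeg a = d -> g (rhoMf b 'X_[a]) = rho b (mono a).
  elim=> [|d IH] a Ha0.
    move/eqP: Ha0; rewrite mdeg_eq0 => /eqP ->; rewrite mpolyX0 mono0.
    have hb : inSub m n b by case: Hb => ->.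
    have D1 : Der (dB b) 1 = 0 by rewrite -mpolyC1 DerC.
    rewrite Hw // /rhoMf D1.
    have -> : qB b = 0 by case: Hb => ->.
    have -> : sB b = psi b by case: Hb => ->.
    by rewrite mul0r !addr0 linearZ /= g1.
  have [i Hi] : exists i, (0 < a i)%N.
    case: (pickP (fun i => (0 < a i)%N)) => [i Hi|H]; first by exists i.
    have : mdeg a = 0%N by rewrite mdegE big1 // => i _; move: (H i) => /negbT; rewrite lt0n negbK => /eqP.
    by rewrite Ha0.
  have Ea : a = ((a - U_(i)) + U_(i))%MM.
    rewrite submK //; apply/mnm_lepP => j; rewrite mnm1E; case: eqP => [<-|] //.
  have Hd : mdeg (a - U_(i))%MM = d.
    by move: Ha0; rewrite {1}Ea mdegD mdeg1 addn1 => [[]].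
  rewrite Ea -mono_U -gX (@step b a' i _ Hb Ha) gX -(IH _ Hd) -g_mulX.
  rewrite -linearD /= -(@rhoMf_X b a' i _ Hb).
  by rewrite -mpolyXD addmC.
move=> p; rewrite {1}[p]mpolyE [in RHS]gE !linear_sum; apply: eq_bigr => a _.
by rewrite !linearZ /= (Hmono _ a erefl) gX.
Qed.

Lemma g_hom b : inSub m 0 b -> forall p, g (rhoM b p) = rho b (g p).
Proof.
move=> Hb p; rewrite /=.
case: b Hb => [a|a|a|a|||] Hb.
- exact: (g_hom_LH (or_introl erefl)).
- exact: (g_hom_LH (or_intror erefl)).
- by rewrite /rhoMf Der_d0 scale0r !add0r g_mulXv.
- by rewrite /rhoMf Der_d0 scale0r !add0r g_mulYv.
all: rewrite /rhoMf Der_d0 mul0r !addr0 linearZ /=; symmetry; apply: scal_g => //;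
  [ by apply: commE_b | by rewrite Hw ].
Qed.


Lemma mderiv_const (p : M) : (forall i, p^`M(i) = 0) -> p = (p@_0%MM)%:MP.
Proof.
move=> H; apply/mpolyP => a; rewrite mcoeffC.
case: (pickP (fun i => (0 < a i)%N)) => [i Hi|H0].
  have Ea : a = ((a - U_(i)) + U_(i))%MM.
    rewrite submK //; apply/mnm_lepP => j; rewrite mnm1E; case: eqP => [<-|] //.
  have : (p^`M(i))@_(a - U_(i))%MM = 0 by rewrite H mcoeff0.
  rewrite mcoeff_mderiv -Ea => /eqP; rewrite mulrn_eq0 /= => /eqP ->.
  have -> : (a == 0%MM) = false.
    apply/negP => /eqP a0; move: Hi; by rewrite a0 mnm0E.
  by rewrite mulr0.
have -> : a = 0%MM by apply/mnmP => i; move: (H0 i) => /negbT; rewrite lt0n negbK mnm0E => /eqP.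
by rewrite eqxx mulr1.
Qed.

Lemma msize_mderiv (p : M) i : p^`M(i) != 0 -> (msize (p^`M(i)) < msize p)%N.
Proof.
move=> H; rewrite -(mlead_deg H).
have Hs : (mlead (p^`M(i)) + U_(i))%MM \in msupp p.
  rewrite mcoeff_msupp; move: (mlead_supp H); rewrite mcoeff_msupp mcoeff_mderiv.
  by apply: contra => /eqP ->; rewrite mul0rn.
by move: (msize_mdeg_lt Hs); rewrite mdegD mdeg1 addn1.
Qed.


Lemma Xv_ord (k : 'I_n) : Xv k = 'X_(lshift n k).
Proof.
have h1 : (0 <= k%:Z) by [].
have h2 : (k%:Z < n%:Z) by rewrite ltz_nat.
have [i [Ei Eik]] := xo_lt h1 h2.
have ik : i = k by apply: val_inj; move: Eik => /= [].
by rewrite /Xv Ei ik.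
Qed.
Lemma Yv_ord (k : 'I_n) : Yv k = 'X_(rshift n k).
Proof.
have h1 : (0 <= k%:Z) by [].
have h2 : (k%:Z < n%:Z) by rewrite ltz_nat.
have [i [Ei Eik]] := xo_lt h1 h2.
have ik : i = k by apply: val_inj; move: Eik => /= [].
by rewrite /Yv Ei ik.
Qed.

Lemma M_mulX (T : M -> Prop) : is_submodule m 0 rhoM T -> forall i q, T q -> T ('X_i * q).
Proof.
case=> T0 TD TZ Tb i q Tq; rewrite -(splitK i); case: (split i) => k /=.
- have := Tb (BI k) isT q Tq; by rewrite /= /rhoMf Der_d0 scale0r !add0r /= Xv_ord.
- have := Tb (BJ k) isT q Tq; by rewrite /= /rhoMf Der_d0 scale0r !add0r /= Yv_ord.
Qed.

Lemma M_gen (T : M -> Prop) : is_submodule m 0 rhoM T -> T 1 -> forall p, T p.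
Proof.
move=> HT T1; have [T0 TD TZ Tb] := HT.
have TX : forall d a, mdeg a = d -> T 'X_[a].
  elim=> [|d IH] a Ha0.
    by move/eqP: Ha0; rewrite mdeg_eq0 => /eqP ->; rewrite mpolyX0.
  have [i Hi] : exists i, (0 < a i)%N.
    case: (pickP (fun i => (0 < a i)%N)) => [i Hi|H]; first by exists i.
    have : mdeg a = 0%N by rewrite mdegE big1 // => i _; move: (H i) => /negbT; rewrite lt0n negbK => /eqP.
    by rewrite Ha0.
  have Ea : a = ((a - U_(i)) + U_(i))%MM.
    rewrite submK //; apply/mnm_lepP => j; rewrite mnm1E; case: eqP => [<-|] //.
  have Hd : mdeg (a - U_(i))%MM = d.
    by move: Ha0; rewrite {1}Ea mdegD mdeg1 addn1 => [[]].
  rewrite Ea addmC mpolyXD; apply: (M_mulX HT); exact: IH.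
elim/mpolyind => [|c a p _ _ IH] //; apply: TD => //; apply: TZ; exact: (TX _ a erefl).
Qed.


Hypothesis (Hpar : odd m = odd n)
  (Hnz : psi (BI (m + n - 1)%N%:Z) * psi (BJ (m + n - 1)%N%:Z) != 0).

Lemma Der_min (p : M) (k : 'I_n) (fx fy : int -> C) :
  (forall j : 'I_n, (j < k)%N -> p^`M(lshift n j) = 0 /\ p^`M(rshift n j) = 0) ->
  Der (dS ((m + n - 1 - k)%N%:Z) fx fy) p =
  (fx k * psi (BI (m + n - 1)%N%:Z)) *: p^`M(lshift n k) +
  (fy k * psi (BJ (m + n - 1)%N%:Z)) *: p^`M(rshift n k).
Proof.
move=> Hj; set a' := ((m + n - 1 - k)%N%:Z).
have Hk : (k%:Z + a') = (m + n - 1)%N%:Z.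
  rewrite /a'; have := ltn_ord k; lia.
rewrite /Der big_split_ord /=; congr (_ + _).
- rewrite (bigD1 k) //= big1 ?addr0.
    rewrite dS_l Hk /Xv xo_ge; last by lia.
    by rewrite -scalerAr mulrC mul_mpolyC scalerA.
  move=> j /negPf jk; rewrite dS_l; case: (ltnP j k) => jlt.
    by rewrite (proj1 (Hj j jlt)) mul0r.
  have jgt : (k < j)%N by rewrite ltn_neqAle jlt andbT; apply/negP => /eqP /val_inj E; rewrite E eqxx in jk.
  rewrite XvZ ?scaler0 ?mulr0 //; rewrite /a'; have := ltn_ord j; lia.
- rewrite (bigD1 k) //= big1 ?addr0.
    rewrite dS_r Hk /Yv xo_ge; last by lia.
    by rewrite -scalerAr mulrC mul_mpolyC scalerA.
  move=> j /negPf jk; rewrite dS_r; case: (ltnP j k) => jlt.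
    by rewrite (proj2 (Hj j jlt)) mul0r.
  have jgt : (k < j)%N by rewrite ltn_neqAle jlt andbT; apply/negP => /eqP /val_inj E; rewrite E eqxx in jk.
  rewrite YvZ ?scaler0 ?mulr0 //; rewrite /a'; have := ltn_ord j; lia.
Qed.

Lemma lin2 (al be ga : C) (x y : M) : ga != 0 ->
  (al + al) *: x = (1 * al) *: x + (-1 * be) *: y + ga^-1 *: ((ga * al) *: x + (ga * be) *: y).
Proof.
move=> hg; rewrite scalerDr !scalerA !mulrA mulVf // !mul1r.
rewrite -!mul_mpolyC !rmorphD !rmorphM /= rmorphN1.
move: (al%:MP) (be%:MP) => A B; ring.
Qed.

Lemma lin3 (al be ga : C) (x y : M) : ga != 0 ->
  (be + be) *: y = ga^-1 *: ((ga * al) *: x + (ga * be) *: y) - ((1 * al) *: x + (-1 * be) *: y).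
Proof.
move=> hg; rewrite scalerDr !scalerA !mulrA mulVf // !mul1r.
rewrite -!mul_mpolyC !rmorphD !rmorphM /= rmorphN1.
move: (al%:MP) (be%:MP) => A B; ring.
Qed.

Lemma M_irr (T : M -> Prop) : is_submodule m 0 rhoM T -> forall p, T p -> p != 0 -> T 1.
Proof.
move=> HT; have [T0 TD TZ Tb] := HT.
have TDer : forall b a' p, (b = BL a' \/ b = BH a') -> m%:Z <= a' -> T p -> T (Der (dB b) p).
  move=> b a' p Hb Ha Tp.
  have := TD _ _ (Tb b _ p Tp) (TZ (- psi b) _ Tp).
  have -> : inSub m 0 b by case: Hb => ->.
  move=> /(_ isT); rewrite /= /rhoMf.
  have -> : qB b = 0 by case: Hb => ->.
  have -> : sB b = psi b by case: Hb => ->.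
  by rewrite mul0r addr0 scaleNr addrAC subrr add0r.
have al0 : psi (BI (m + n - 1)%N%:Z) != 0 by move: Hnz; rewrite mulf_eq0 negb_or => /andP [].
have be0 : psi (BJ (m + n - 1)%N%:Z) != 0 by move: Hnz; rewrite mulf_eq0 negb_or => /andP [].
have two0 : forall c : C, c != 0 -> c + c != 0.
  by move=> c c0; rewrite -mulr2n mulrn_eq0 negb_or c0.
suff H : forall s p, (msize p < s)%N -> T p -> p != 0 -> T 1.
  by move=> p; apply: (H (msize p).+1).
elim=> [//|s IH] p Hs Tp p0.
case: (pickP (fun i => p^`M(i) != 0)) => [i Hi|Hd]; last first.
  have Hc : p = (p@_0%MM)%:MP by apply: mderiv_const => i; move: (Hd i) => /negbT; rewrite negbK => /eqP.
  have c0 : p@_0%MM != 0 by apply: contra p0; rewrite {2}Hc => /eqP ->; rewrite mpolyC0.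
  have := TZ (p@_0%MM)^-1 _ Tp; rewrite {2}Hc -mul_mpolyC -rmorphM /= mulVf // mpolyC1.
pose P j := [exists k : 'I_n, (k == j :> nat) && ((p^`M(lshift n k) != 0) || (p^`M(rshift n k) != 0))].
have exP : exists j, P j.
  move: Hi; rewrite -(splitK i); case: (split i) => k /= Hk; exists k;
    apply/existsP; exists k; by rewrite eqxx /= Hk ?orbT.
case: (ex_minnP exP) => j /existsP [k /andP [/eqP kj Hk]] Hmin.
subst j.
have Hlow : forall j : 'I_n, (j < k)%N -> p^`M(lshift n j) = 0 /\ p^`M(rshift n j) = 0.
  move=> j jk; case: (boolp.pselect (p^`M(lshift n j) = 0 /\ p^`M(rshift n j) = 0)) => // H.
  have : P j.
    apply/existsP; exists j; rewrite eqxx /=.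
    by rewrite -negb_and; apply/negP => /andP [/eqP e1 /eqP e2]; apply: H.
  move/Hmin; rewrite leqNgt jk //.
set a' := ((m + n - 1 - k)%N%:Z).
have Ha' : m%:Z <= a' by rewrite /a'; have := ltn_ord k; lia.
have ga0 : fL a' k != 0.
  rewrite /fL intr_eq0; apply/eqP => E.
  have : ~~ odd (m + n) by rewrite oddD Hpar addbb.
  have := odd_double_half (m + n); rewrite -muln2.
  case: (odd (m + n)) => // Eh _; move: E; rewrite /a'; have := ltn_ord k; lia.
have TH : T (Der (dB (BH a')) p) by apply: (TDer _ a') => //; right.
have TL : T (Der (dB (BL a')) p) by apply: (TDer _ a') => //; left.
rewrite /= !Der_min // in TH TL.
set x := p^`M(lshift n k) in TH TL Hk; set y := p^`M(rshift n k) in TH TL Hk.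
set al := psi _ in TH TL al0; set be := psi _ in TH TL be0.
have Tx : T x.
  have := TZ (al + al)^-1 _ (TD _ _ TH (TZ (fL a' k)^-1 _ TL)).
  by rewrite -(@lin2 al be (fL a' k) x y ga0) scalerA mulVf ?two0 // scale1r.
have Ty : T y.
  have := TZ (be + be)^-1 _ (TD _ _ (TZ (fL a' k)^-1 _ TL) (TZ (-1) _ TH)).
  by rewrite scaleN1r -(@lin3 al be (fL a' k) x y ga0) scalerA mulVf ?two0 // scale1r.
case/orP: Hk => Hk.
- apply: (IH x) => //; apply: leq_trans (msize_mderiv Hk) _; by rewrite -ltnS.
- apply: (IH y) => //; apply: leq_trans (msize_mderiv Hk) _; by rewrite -ltnS.
Qed.


Variable (f : {linear V -> M}).
Hypothesis (Hf : is_Gmod_hom m 0 rho rhoM f) (Hf1 : f w0 = 1)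
  (Huniq : forall G : {linear V -> V}, is_Gmod_hom m 0 rho rho G -> G w0 = w0 -> forall v, G v = v).

Definition gf (v : V) : V := g (f v).
Lemma gf_is_linear : linear gf.
Proof. by move=> c u v; rewrite /gf !linearP. Qed.
HB.instance Definition _ := GRing.isLinear.Build C V V _ gf gf_is_linear.

Lemma gfK v : g (f v) = v.
Proof.
apply: (Huniq (G := gf)); last by rewrite /= /gf Hf1 g1.
by move=> b Hb u; rewrite /= /gf Hf // g_hom.
Qed.

Lemma scal_b b c : inSub m 0 b -> (forall q, rhoMf b q = c *: q) -> forall w, rho b w = c *: w.
Proof. by move=> Hb H w; rewrite -[w in LHS]gfK -g_hom // /= H linearZ /= gfK. Qed.

Lemma dS_big a fx fy : (m + n)%N%:Z <= a -> forall j, dS a fx fy j = 0.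
Proof.
move=> Ha j; rewrite /dS; case: (split j) => k; by rewrite ?XvZ ?YvZ ?scaler0 //; lia.
Qed.

Lemma main_sec : irreducible_Gmod m 0 rho /\
  forall (w : V) (i : nat),
    [/\ rho (BL (m + n + i)%:Z) w = psi (BL (m + n + i)%:Z) *: w,
        rho (BH (m + n + i)%:Z) w = psi (BH (m + n + i)%:Z) *: w,
        rho (BI (n + i)%:Z) w = psi (BI (n + i)%:Z) *: w &
        rho (BJ (n + i)%:Z) w = psi (BJ (n + i)%:Z) *: w].
Proof.
split; last first.
  move=> w i; split; apply: scal_b => //=; try lia; move=> q; rewrite /rhoMf /=.
  - by rewrite (Der_ext _ (e := fun _ => 0)) ?Der_d0 ?mul0r ?addr0 // => j; apply: dS_big; lia.
  - by rewrite (Der_ext _ (e := fun _ => 0)) ?Der_d0 ?mul0r ?addr0 // => j; apply: dS_big; lia.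
  - by rewrite Der_d0 scale0r !add0r /Xv xo_ge ?mul_mpolyC //; lia.
  - by rewrite Der_d0 scale0r !add0r /Yv xo_ge ?mul_mpolyC //; lia.
split.
  exists w0; apply/eqP => w00; move: Hf1; rewrite w00 linear0 => /eqP; by rewrite eq_sym oner_eq0.
move=> S [S0 SD SZ Sb].
case: (boolp.pselect (exists v, S v /\ v != 0)) => [[v [Sv v0]]|H]; last first.
  left => v Sv; case: (eqVneq v 0) => // hv; exfalso; apply: H; by exists v.
right.
pose T := fun q => exists s, S s /\ f s = q.
have HT : is_submodule m 0 rhoM T.
  split.
  - by exists 0; rewrite linear0.
  - by move=> u1 u2 [s1 [S1 <-]] [s2 [S2 <-]]; exists (s1 + s2); rewrite linearD; split => //; apply: SD.
  - by move=> c u [s1 [S1 <-]]; exists (c *: s1); rewrite linearZ; split => //; apply: SZ.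
  - by move=> b Hb u [s1 [S1 <-]]; exists (rho b s1); rewrite Hf //; split => //; apply: Sb.
have fv0 : f v != 0 by apply: contra v0 => /eqP fv; rewrite -(gfK v) fv linear0.
have T1 := M_irr HT (ex_intro _ v (conj Sv erefl)) fv0.
move=> u; have [s [Ss fs]] := M_gen HT T1 (f u).
by rewrite -(gfK u) -fs gfK.
Qed.

End Model.

Definition idV (C : fieldType) (V : lmodType C) (v : V) : V := v.
Lemma idV_is_linear (C : fieldType) (V : lmodType C) : linear (@idV C V).
Proof. by []. Qed.
HB.instance Definition _ (C : fieldType) (V : lmodType C) :=
  GRing.isLinear.Build C V V _ (@idV C V) (@idV_is_linear C V).


Theorem corollary3p4 (R : realType) (m n : nat)
    (psi : Gbasis -> R[i])
    (Hm : (0 < m)%N) (Hmn : (m < n)%N) (Hpar : odd m = odd n)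
    (Hpsi : whittaker_fun m n psi)
    (Hnz : psi (BI (m + n - 1)%:Z) * psi (BJ (m + n - 1)%:Z) != 0)
    (V : lmodType R[i]) (rho : Gbasis -> {linear V -> V}) (w0 : V)
    (Hind : is_induced m n psi rho w0) :
  irreducible_Gmod m 0 rho /\
  forall (w : V) (i : nat),
    [/\ rho (BL (m + n + i)%:Z) w = psi (BL (m + n + i)%:Z) *: w,
        rho (BH (m + n + i)%:Z) w = psi (BH (m + n + i)%:Z) *: w,
        rho (BI (n + i)%:Z) w = psi (BI (n + i)%:Z) *: w &
        rho (BJ (n + i)%:Z) w = psi (BJ (n + i)%:Z) *: w].
Proof.
have [HG Hw HU] := Hind.
have [f [Hf Hf1 _]] := HU _ (rhoM n psi) 1 (rhoM_Gmod Hm Hmn Hpsi) (rhoM_wh psi Hm Hmn).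
have [F0 [HF0 HF01 HF0u]] := HU V rho w0 HG Hw.
have Huniq : forall G : {linear V -> V}, is_Gmod_hom m 0 rho rho G -> G w0 = w0 -> forall v, G v = v.
  move=> G HGh HG1 v; rewrite (HF0u G HGh HG1 v).
  have := HF0u (@idV _ V : {linear V -> V}) (fun b _ u => erefl) erefl v.
  by rewrite /= /idV => <-.
exact: (main_sec Hm Hmn Hpsi HG Hw Hpar Hnz Hf Hf1 Huniq).
Qed.
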